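(* Let $a_{n,k}$ denote the number of matchings of size $n$ containing exactly $k$ occurrences of the endhered pattern $21$. For any integers $n>k\ge0$, $$a_{n,k}=\binom{n-1}{k}a_{n-k,0}.$$
   Context: A matching of size $n$ is a set of $n$ arcs $(a,b)$ with $1\le a<b\le 2n$ such that each point of $\{1,\dots,2n\}$ belongs to exactly one arc. An occurrence of the endhered pattern $21$ in a matching $\mu$ is a pair of arcs of $\mu$ of the form $(i+1,j+2),(i+2,j+1)$ (two nested arcs with consecutive starting points and consecutive ending points); the number of occurrences is the number of such pairs. *)

(* Defs.v *)
From mathcomp Require Import all_boot.
Set Implicit Arguments. Unset Strict Implicit. Unset Printing Implicit Defensive.

(* Points {1,...,2n} are represented 0-based by 'I_(n.*2): point p+1 <-> p. *)
Definition arc n := ('I_(n.*2) * 'I_(n.*2))%type.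

Definition is_matching n (M : {set arc n}) : bool :=
  [&& #|M| == n,
      [forall e in M, e.1 < e.2] &
      [forall x : 'I_(n.*2), #|[set e in M | (e.1 == x) || (e.2 == x)]| == 1]].

(* Occurrences of the endhered pattern 21: pairs of arcs (i+1,j+2),(i+2,j+1);
   each occurrence is determined by its outer arc (i+1,j+2). *)
Definition occ21 n (M : {set arc n}) : nat :=
  #|[set e in M | [exists f in M,
        (val f.1 == (val e.1).+1) && ((val f.2).+1 == val e.2)]]|.

Definition a_nk (n k : nat) : nat :=
  #|[set M : {set arc n} | is_matching M && (occ21 M == k)]|.

(* Main.v *)
Require Import Defs.
From mathcomp Require Import all_boot zify.
Set Implicit Arguments. Unset Strict Implicit. Unset Printing Implicit Defensive.


Definition ins (c d x : nat) := if x <= c then x else if x <= d then x.+1 else x.+2.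
Definition del (a b x : nat) := if x <= a then x else if x <= b then x.-1 else x.-2.

Ltac nl := rewrite /ins /del; repeat case: ifP; lia.

Section S.
Context {B : nat}.
Local Notation T := ('I_B * 'I_B)%type.

Definition tch (p : T) (x : nat) := (val p.1 == x) || (val p.2 == x).

Definition mB n (M : {set T}) : bool :=
  [&& #|M| == n, [forall e in M, (e.1 < e.2) && (e.2 < n.*2)] &
      [forall x : 'I_B, (x < n.*2) ==> (#|[set e in M | (e.1 == x) || (e.2 == x)]| == 1)]].

Definition Oc (M : {set T}) : {set T} :=
  [set e in M | [exists f in M, (val f.1 == (val e.1).+1) && ((val f.2).+1 == val e.2)]].

Definition Sk n k := [set M : {set T} | mB n M && (#|Oc M| == k)].

Lemma card1_eq (X : finType) (A : {set X}) a b : #|A| = 1 -> a \in A -> b \in A -> a = b.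
Proof. by move/eqP/cards1P=> [z ->]; rewrite !inE => /eqP -> /eqP ->. Qed.

Lemma pairP (p q : T) : val p.1 = val q.1 -> val p.2 = val q.2 -> p = q.
Proof. by case: p q => [??] [??] /= /val_inj -> /val_inj ->. Qed.

Lemma mBP n (M : {set T}) : reflect
  [/\ #|M| = n, (forall e, e \in M -> e.1 < e.2 < n.*2),
      (forall x : 'I_B, x < n.*2 -> exists2 e, e \in M & tch e x) &
      (forall e f x, e \in M -> f \in M -> tch e x -> tch f x -> e = f)] (mB n M).
Proof.
apply: (iffP and3P) => [[/eqP hc /forall_inP ho /forallP hx]|[hc ho hcov hu]].
  split => //.
  - move=> x lx; move: (hx x); rewrite lx /= => /cards1P [e he].
    have : e \in [set e in M | (e.1 == x) || (e.2 == x)] by rewrite he inE.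
    by rewrite inE => /andP [eM ex]; exists e.
  - move=> e f x eM fM ex fx.
    have [y [yx ey]] : exists y : 'I_B, val y = x /\ (e.1 == y) || (e.2 == y).
      by case/orP: ex => /eqP <-; [exists e.1|exists e.2]; rewrite eqxx ?orbT.
    have ly : y < n.*2.
      by case/orP: ey => /eqP <-; case/andP: (ho e eM) => //= /ltn_trans; apply.
    move: (hx y); rewrite ly /= => /eqP h1.
    apply: (card1_eq h1); rewrite inE ?eM ?fM //=.
    by move: fx; rewrite /tch -yx !val_eqE.
split; first by rewrite hc.
  by apply/forall_inP => e eM; apply: ho.
apply/forallP => x; apply/implyP => lx; apply/cards1P.
case: (hcov x lx) => e eM ex; exists e; apply/setP => f; rewrite !inE.
apply/idP/idP => [/andP [fM fx]|/eqP ->].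
  by apply/eqP; apply: (hu f e x) => //; rewrite /tch !val_eqE.
by rewrite eM; move: ex; rewrite /tch !val_eqE.
Qed.

End S.


Lemma a_cnt n k : a_nk n k = #|@Sk (n.*2) n k|.
Proof.
rewrite /a_nk /Sk; apply: eq_card => M; rewrite !inE /is_matching /mB /occ21 /Oc.
congr (_ && _); congr [&& _, _ & _].
  by apply: eq_forallb => e; rewrite ltn_ord andbT.
by apply: eq_forallb => x; rewrite ltn_ord.
Qed.

Section W.
Context {B B' : nat} (h : B <= B').
Local Notation T := ('I_B * 'I_B)%type.
Local Notation T' := ('I_B' * 'I_B')%type.
Definition wp (p : T) : T' := (widen_ord h p.1, widen_ord h p.2).
Lemma wp_inj : injective wp.
Proof. by move=> p q [e1 e2]; apply: pairP. Qed.

Lemma mB_wp n (M : {set T}) : n.*2 <= B -> mB n (wp @: M) = mB n M.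
Proof.
move=> hB; apply/mBP/mBP => [[hc ho hcov hu]|[hc ho hcov hu]]; split.
- by rewrite -hc card_imset //; apply: wp_inj.
- by move=> e eM; move: (ho (wp e)); rewrite imset_f //; apply.
- move=> x lx; case: (hcov (widen_ord h x) lx) => e /imsetP [e0 e0M ->] te.
  by exists e0.
- by move=> e f x eM fM ex fx; apply: wp_inj; apply: (hu _ _ x); rewrite ?imset_f.
- by rewrite card_imset //; apply: wp_inj.
- by move=> e /imsetP [e0 e0M ->]; apply: ho.
- move=> x lx.
  have lxB : x < B by apply: leq_trans lx _.
  case: (hcov (Ordinal lxB) lx) => e0 e0M te; exists (wp e0) => //.
  by rewrite imset_f.
- move=> e f x /imsetP [e0 e0M ->] /imsetP [f0 f0M ->] ex fx.
  by rewrite (hu e0 f0 x).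
Qed.
Lemma Oc_wp (M : {set T}) : Oc (wp @: M) = wp @: Oc M.
Proof.
apply/setP => q; apply/idP/idP.
  rewrite inE => /andP [/imsetP [q0 q0M ->] /exists_inP [r /imsetP [r0 r0M ->] hr]].
  by rewrite imset_f // inE q0M; apply/exists_inP; exists r0.
case/imsetP => q0; rewrite inE => /andP [q0M /exists_inP [r0 r0M hr]] ->.
by rewrite inE imset_f //; apply/exists_inP; exists (wp r0); rewrite ?imset_f.
Qed.

Lemma wp_surj n (M : {set T'}) : n.*2 <= B -> mB n M -> M = wp @: (wp @^-1: M).
Proof.
move=> hB /mBP [_ ho _ _]; apply/setP => q; apply/idP/idP; last first.
  by case/imsetP => q0; rewrite inE => + ->.
move=> qM; case/andP: (ho q qM) => l1 l2.
have b2 : q.2 < B by apply: leq_trans l2 hB.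
have b1 : q.1 < B by apply: ltn_trans b2.
have -> : q = wp (Ordinal b1, Ordinal b2) by apply: pairP.
by rewrite imset_f // inE -(_ : q = wp (Ordinal b1, Ordinal b2)) //; apply: pairP.
Qed.

Lemma cnt_wp n k : n.*2 <= B -> #|@Sk B' n k| = #|@Sk B n k|.
Proof.
move=> hB.
have -> : @Sk B' n k = (fun M : {set T} => wp @: M) @: @Sk B n k.
  apply/setP => M; apply/idP/idP.
    rewrite inE => /andP [hm hk]; rewrite (wp_surj hB hm) imset_f //.
    rewrite inE -(mB_wp _ hB) -(wp_surj hB hm) hm /=.
    by rewrite (wp_surj hB hm) Oc_wp card_imset in hk; last exact: wp_inj.
  case/imsetP => M0; rewrite inE => /andP [hm hk] ->.
  by rewrite inE mB_wp // hm Oc_wp card_imset //; exact: wp_inj.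
by rewrite card_imset //; apply: imset_inj; apply: wp_inj.
Qed.
End W.


Lemma ins_cases c d z : (z <= c /\ ins c d z = z) \/ (c < z <= d /\ ins c d z = z.+1) \/ (d < z /\ ins c d z = z.+2).
Proof. nl. Qed.
Lemma del_cases a b z : (z <= a /\ del a b z = z) \/ (a < z <= b /\ del a b z = z.-1) \/ (b < z /\ del a b z = z.-2).
Proof. nl. Qed.

Ltac kins := repeat match goal with
 | |- context [ins ?c ?d ?z] => let E := fresh "E" in have E := ins_cases c d z;
      let t := fresh "t" in set (t := ins c d z) in *; clearbody t
 | H : context [ins ?c ?d ?z] |- _ => let E := fresh "E" in have E := ins_cases c d z;
      let t := fresh "t" in set (t := ins c d z) in *; clearbody t
 | |- context [del ?c ?d ?z] => let E := fresh "E" in have E := del_cases c d z;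
      let t := fresh "t" in set (t := del c d z) in *; clearbody t
 | H : context [del ?c ?d ?z] |- _ => let E := fresh "E" in have E := del_cases c d z;
      let t := fresh "t" in set (t := del c d z) in *; clearbody t
 end.

Ltac natrev := repeat match goal with H : context [@nat_of_ord _ _] |- _ =>
  lazymatch type of H with
  | ~ _ => revert H
  | forall _ : _, _ => clear H
  | _ => revert H end end.
Ltac natset := repeat match goal with
  | |- context [@nat_of_ord ?n ?x] => let v := fresh "v" in set v := @nat_of_ord n x; clearbody v end.
Ltac slia := natrev; natset; lia.

Lemma ins_inj c d x y : c <= d -> ins c d x = ins c d y -> x = y.
Proof. nl. Qed.

Section C.
Context {B : nat}.
Local Notation T := ('I_B * 'I_B)%type.

Definition mk (p0 : T) (x y : nat) : T := (insubd p0.1 x, insubd p0.2 y).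
Lemma mk1 p0 x y : x < B -> (mk p0 x y).1 = x :> nat.
Proof. by move=> h; rewrite /= val_insubd h. Qed.
Lemma mk2 p0 x y : y < B -> (mk p0 x y).2 = y :> nat.
Proof. by move=> h; rewrite /= val_insubd h. Qed.
Lemma pairN (p q : T) : p.1 = q.1 :> nat -> p.2 = q.2 :> nat -> p = q.
Proof. exact: pairP. Qed.

Definition Ee (g : T) := mk g g.1 (g.2 + 2).
Definition psi (g p : T) := if p == g then mk g g.1.+1 g.2.+1
   else mk p (ins g.1 g.2 p.1) (ins g.1 g.2 p.2).
Definition InsS (M : {set T}) g := Ee g |: psi g @: M.

Lemma tchE (p : T) x : tch p x = (p.1 == x :> nat) || (p.2 == x :> nat).
Proof. by []. Qed.

Lemma mB_ord n M (p : T) : mB n M -> p \in M -> p.1 < p.2 /\ p.2 < n.*2.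
Proof. by case/mBP => _ ho _ _ /ho /andP. Qed.

Lemma mB_av n M (p g : T) : mB n M -> p \in M -> g \in M -> p <> g ->
  [/\ p.1 <> g.1 :> nat, p.1 <> g.2 :> nat, p.2 <> g.1 :> nat & p.2 <> g.2 :> nat].
Proof.
case/mBP => _ _ _ hu pM gM ne; split => e; apply: ne.
- by apply: (hu _ _ g.1) => //; rewrite tchE ?e eqxx ?orbT.
- by apply: (hu _ _ g.2) => //; rewrite tchE ?e eqxx ?orbT.
- by apply: (hu _ _ g.1) => //; rewrite tchE ?e eqxx ?orbT.
- by apply: (hu _ _ g.2) => //; rewrite tchE ?e eqxx ?orbT.
Qed.

Lemma OcP (X : {set T}) q : reflect (q \in X /\ exists2 r, r \in X & r.1 = q.1.+1 :> nat /\ r.2.+1 = q.2 :> nat)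
  (q \in Oc X).
Proof.
rewrite inE; apply: (iffP andP) => [[qX /exists_inP [r rX /andP [/eqP h1 /eqP h2]]]|[qX [r rX [h1 h2]]]].
  by split => //; exists r.
by split => //; apply/exists_inP; exists r => //; apply/andP; split; apply/eqP.
Qed.

Section Ins.
Variables (n : nat) (M : {set T}) (g : T).
Hypotheses (hM : mB n M) (gM : g \in M) (hB : n.+1.*2 <= B).

Lemma g_ord : g.1 < g.2 /\ g.2 < n.*2.
Proof. exact: mB_ord hM gM. Qed.

Lemma Ee1 : (Ee g).1 = g.1 :> nat.
Proof. by rewrite mk1 //; case: g_ord; slia. Qed.
Lemma Ee2 : (Ee g).2 = g.2 + 2 :> nat.
Proof. by rewrite mk2 //; case: g_ord; slia. Qed.
Lemma psig1 : (psi g g).1 = g.1.+1 :> nat.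
Proof. by rewrite /psi eqxx mk1 //; case: g_ord; slia. Qed.
Lemma psig2 : (psi g g).2 = g.2.+1 :> nat.
Proof. by rewrite /psi eqxx mk2 //; case: g_ord; slia. Qed.

Lemma psip p : p \in M -> p <> g ->
  [/\ (psi g p).1 = ins g.1 g.2 p.1 :> nat, (psi g p).2 = ins g.1 g.2 p.2 :> nat,
      p.1 < p.2, p.2 < n.*2 &
      [/\ p.1 <> g.1 :> nat, p.1 <> g.2 :> nat, p.2 <> g.1 :> nat & p.2 <> g.2 :> nat]].
Proof.
move=> pM ne; have [o1 o2] := mB_ord hM pM; have := mB_av hM pM gM ne.
rewrite /psi; case: eqP => // _ av; split => //.
  by rewrite mk1 //; kins; slia.
by rewrite mk2 //; kins; slia.
Qed.

Lemma InsSv q : q \in InsS M g ->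
 (q = Ee g /\ q.1 = g.1 :> nat /\ q.2 = g.2 + 2 :> nat) \/
 (q = psi g g /\ q.1 = g.1.+1 :> nat /\ q.2 = g.2.+1 :> nat) \/
 (exists p, [/\ p \in M, p <> g, q = psi g p, q.1 = ins g.1 g.2 p.1 :> nat &
    [/\ q.2 = ins g.1 g.2 p.2 :> nat, p.1 < p.2, p.2 < n.*2 &
      [/\ p.1 <> g.1 :> nat, p.1 <> g.2 :> nat, p.2 <> g.1 :> nat & p.2 <> g.2 :> nat]]]).
Proof.
case/setU1P => [->|/imsetP [p pM ->]]; first by left; rewrite Ee1 Ee2.
case: (p =P g) => [->|ne]; first by right; left; rewrite psig1 psig2.
right; right; exists p; have [h1 h2 h3 h4 h5] := psip pM ne; split => //.
Qed.

Lemma eqv (r s : T) : r = s -> r.1 = s.1 :> nat /\ r.2 = s.2 :> nat.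
Proof. by move->. Qed.

Lemma psi_inj : {in M &, injective (psi g)}.
Proof.
have [g1 g2] := g_ord.
move=> p q pM qM e; have [e1 e2] := eqv e.
case: (p =P g) => [pg|pg]; case: (q =P g) => [qg|qg]; try by rewrite pg qg.
- subst p; have [h1 h2 h3 h4 [a1 a2 a3 a4]] := psip qM qg.
  move: e1; rewrite psig1 h1; kins; slia.
- subst q; have [h1 h2 h3 h4 [a1 a2 a3 a4]] := psip pM pg.
  move: e1; rewrite psig1 h1; kins; slia.
have [h1 h2 h3 h4 [a1 a2 a3 a4]] := psip pM pg.
have [k1 k2 k3 k4 [b1 b2 b3 b4]] := psip qM qg.
apply: pairN; move: e1 e2; rewrite h1 h2 k1 k2; kins; slia.
Qed.

Lemma Ee_notin : Ee g \notin psi g @: M.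
Proof.
have [g1 g2] := g_ord.
apply/imsetP => [[p pM e]]; have [e1 e2] := eqv e.
case: (p =P g) => [pg|pg].
  by subst p; move: e1; rewrite Ee1 psig1; slia.
have [h1 h2 h3 h4 [a1 a2 a3 a4]] := psip pM pg.
move: e1; rewrite Ee1 h1; kins; slia.
Qed.

Lemma tchP (p : T) x : tch p x -> p.1 = x :> nat \/ p.2 = x :> nat.
Proof. by rewrite tchE => /orP [/eqP|/eqP]; auto. Qed.

Lemma InsS_mB : mB n.+1 (InsS M g).
Proof.
have [g1 g2] := g_ord.
have hM' := hM; case/mBP: hM' => hc ho hcov hu.
apply/mBP; split.
- by rewrite /InsS cardsU1 Ee_notin card_in_imset ?hc ?add1n //; exact: psi_inj.
- move=> e /InsSv [[_ [? ?]]|[[_ [? ?]]|[p [_ _ _ ? [? ? ? _]]]]]; kins; slia.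
- move=> x lx.
  case: (boolP ((x == g.1 :> nat) || (x == g.2 + 2 :> nat))) => h1.
    exists (Ee g); rewrite ?setU11 // tchE Ee1 Ee2.
    by case/orP: h1 => /eqP ->; rewrite eqxx ?orbT.
  case: (boolP ((x == g.1.+1 :> nat) || (x == g.2.+1 :> nat))) => h2.
    exists (psi g g); first by rewrite /InsS setU1r // imset_f.
    rewrite tchE psig1 psig2.
    by case/orP: h2 => /eqP ->; rewrite eqxx ?orbT.
  have ly : del g.1 (g.2 + 2) x < B.
    by move: h1 h2 => /norP [/eqP ? /eqP ?] /norP [/eqP ? /eqP ?]; kins; slia.
  have ly2 : del g.1 (g.2 + 2) x < n.*2.
    by move: h1 h2 => /norP [/eqP ? /eqP ?] /norP [/eqP ? /eqP ?]; kins; slia.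
  case: (hcov (Ordinal ly) ly2) => p pM tp.
  have pg : p <> g.
    move=> pg; subst p; move/tchP: tp => /= tp.
    by move: h1 h2 tp => /norP [/eqP ? /eqP ?] /norP [/eqP ? /eqP ?]; kins; slia.
  have [k1 k2 k3 k4 _] := psip pM pg.
  exists (psi g p); first by rewrite /InsS setU1r // imset_f.
  rewrite tchE k1 k2; move/tchP: tp => /= tp.
  apply/orP; move: h1 h2 tp => /norP [/eqP ? /eqP ?] /norP [/eqP ? /eqP ?].
  by kins; case=> ?; [left|right]; apply/eqP; slia.
- move=> e f x /InsSv he /InsSv hf.
  case: he => [[-> [e1 e2]]|[[-> [e1 e2]]|[p [pM pg -> e1 [e2 p1 p2 [a1 a2 a3 a4]]]]]];
  case: hf => [[-> [f1 f2]]|[[-> [f1 f2]]|[q [qM qg -> f1 [f2 q1 q2 [b1 b2 b3 b4]]]]]] // /tchP ex /tchP fx;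
  last first.
    have hi : forall a b, ins g.1 g.2 a = ins g.1 g.2 b -> a = b.
      by move=> a b; apply: ins_inj; apply: ltnW.
    case: ex => ex; case: fx => fx; congr psi.
    + have h : p.1 = q.1 :> nat by apply: hi; rewrite -e1 -f1 ex fx.
      by apply: (hu p q p.1) => //; rewrite tchE ?h eqxx ?orbT.
    + have h : p.1 = q.2 :> nat by apply: hi; rewrite -e1 -f2 ex fx.
      by apply: (hu p q p.1) => //; rewrite tchE ?h eqxx ?orbT.
    + have h : p.2 = q.1 :> nat by apply: hi; rewrite -e2 -f1 ex fx.
      by apply: (hu p q p.2) => //; rewrite tchE ?h eqxx ?orbT.
    + have h : p.2 = q.2 :> nat by apply: hi; rewrite -e2 -f2 ex fx.
      by apply: (hu p q p.2) => //; rewrite tchE ?h eqxx ?orbT.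
  all: exfalso; kins; slia.
Qed.

Lemma InsS_Oc : Oc (InsS M g) = Ee g |: psi g @: Oc M.
Proof.
have [g1 g2] := g_ord.
have hM' := hM; case/mBP: hM' => hc ho hcov hu.
apply/setP => q; apply/idP/idP.
  case/OcP => qI [r rI [h1 h2]].
  case: (InsSv qI) => [[-> _]|[[qe [q1 q2]]|[p [pM pg qe q1 [q2 p1 p2 [a1 a2 a3 a4]]]]]].
  - exact: setU11.
  - rewrite qe; apply/setU1P; right; apply/imsetP; exists g => //; apply/OcP; split => //.
    case: (InsSv rI) => [[_ [r1 r2]]|[[_ [r1 r2]]|[p' [pM' pg' _ r1 [r2 p1' p2' _]]]]];
      try (exfalso; slia).
    by exists p' => //; kins; split; slia.
  - rewrite qe; apply/setU1P; right; apply/imsetP; exists p => //; apply/OcP; split => //.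
    case: (InsSv rI) => [[_ [r1 r2]]|[[_ [r1 r2]]|[p' [pM' pg' _ r1 [r2 p1' p2' [b1 b2 b3 b4]]]]]].
    + by exists g => //; kins; split; slia.
    + by exfalso; kins; slia.
    + by exists p' => //; kins; split; slia.
case/setU1P => [->|/imsetP [p /OcP [pM [r rM [h1 h2]]] ->]].
  apply/OcP; split; first exact: setU11.
  by exists (psi g g); [rewrite /InsS setU1r // imset_f | rewrite psig1 psig2 Ee1 Ee2; split; slia].
apply/OcP; split; first by rewrite /InsS setU1r // imset_f.
have [o1 o2] := mB_ord hM rM.
case: (p =P g) => [pg|pg].
  subst p; have rg : r <> g by move=> rg; subst r; slia.
  have [k1 k2 _ _ _] := psip rM rg.
  exists (psi g r); first by rewrite /InsS setU1r // imset_f.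
  by rewrite k1 k2 psig1 psig2; kins; split; slia.
have [k1 k2 _ _ [a1 a2 a3 a4]] := psip pM pg.
case: (r =P g) => [rg|rg].
  subst r; exists (Ee g); first exact: setU11.
  by rewrite k1 k2 Ee1 Ee2; kins; split; slia.
have [l1 l2 _ _ [b1 b2 b3 b4]] := psip rM rg.
exists (psi g r); first by rewrite /InsS setU1r // imset_f.
by rewrite k1 k2 l1 l2; kins; split; slia.
Qed.

Lemma InsS_Occ : #|Oc (InsS M g)| = (#|Oc M|).+1.
Proof.
have sub : Oc M \subset M by apply/subsetP => x; rewrite inE => /andP [].
have nin : Ee g \notin psi g @: Oc M.
  by apply: contra Ee_notin; apply: (subsetP (imsetS (psi g) sub)).
rewrite InsS_Oc cardsU1 nin card_in_imset ?add1n //.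
by move=> x y /(subsetP sub) xM /(subsetP sub) yM; apply: psi_inj.
Qed.
End Ins.
End C.


Lemma del_le a b z : del a b z <= z.
Proof. nl. Qed.
Lemma del_inj a b x y : a < b -> x <> a -> x <> b -> y <> a -> y <> b -> del a b x = del a b y -> x = y.
Proof. nl. Qed.

Section D.
Context {B : nat}.
Local Notation T := ('I_B * 'I_B)%type.

Definition chi (e p : T) := mk p (del e.1 e.2 p.1) (del e.1 e.2 p.2).
Definition DelS (M : {set T}) e := chi e @: (M :\ e).
Definition Dg (e : T) := mk e e.1 (e.2 - 2).

Lemma chi1 e p : (chi e p).1 = del e.1 e.2 p.1 :> nat.
Proof. by rewrite mk1 //; apply: leq_ltn_trans (del_le _ _ _) _. Qed.
Lemma chi2 e p : (chi e p).2 = del e.1 e.2 p.2 :> nat.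
Proof. by rewrite mk2 //; apply: leq_ltn_trans (del_le _ _ _) _. Qed.
Lemma Dg1 e : (Dg e).1 = e.1 :> nat.
Proof. by rewrite /Dg mk1. Qed.
Lemma Dg2 e : (Dg e).2 = e.2 - 2 :> nat.
Proof. by rewrite /Dg mk2 //; apply: leq_ltn_trans (leq_subr _ _) _. Qed.
Lemma psi_eq (g : T) : psi g g = mk g g.1.+1 g.2.+1.
Proof. by rewrite /psi eqxx. Qed.
Lemma psi_ne (g p : T) : p <> g -> psi g p = mk p (ins g.1 g.2 p.1) (ins g.1 g.2 p.2).
Proof. by rewrite /psi; case: eqP. Qed.

Section Del.
Variables (n : nat) (M : {set T}) (e : T).
Hypotheses (hM : mB n.+1 M) (eO : e \in Oc M) (hB : n.+1.*2 <= B).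

Lemma eM : e \in M.
Proof. by case/OcP: eO. Qed.

Lemma fex : exists f, [/\ f \in M, f.1 = e.1.+1 :> nat, f.2.+1 = e.2 :> nat & f.1 < f.2].
Proof.
case/OcP: eO => _ [f fM [h1 h2]]; exists f; split => //.
by case: (mB_ord hM fM).
Qed.

Lemma e_ord : e.1.+2 < e.2 /\ e.2 < n.+1.*2.
Proof.
have [f [fM h1 h2 h3]] := fex; have [o1 o2] := mB_ord hM eM; split => //; slia.
Qed.

Lemma chip p : p \in M -> p <> e ->
  [/\ p.1 < p.2, p.2 < n.+1.*2 &
      [/\ p.1 <> e.1 :> nat, p.1 <> e.2 :> nat, p.2 <> e.1 :> nat & p.2 <> e.2 :> nat]].
Proof.
move=> pM ne; have [o1 o2] := mB_ord hM pM; split => //.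
exact: mB_av hM pM eM ne.
Qed.

Lemma DelS_mB : mB n (DelS M e).
Proof.
have [e1 e2] := e_ord.
have [f [fM f1 f2 f3]] := fex.
have hM' := hM; case/mBP: hM' => hc ho hcov hu.
have chi_inj : {in M :\ e &, injective (chi e)}.
  move=> p q /setD1P [pe pM] /setD1P [qe qM] h.
  have [p1 p2 [a1 a2 a3 a4]] := chip pM (elimN eqP pe).
  have [q1 q2 [b1 b2 b3 b4]] := chip qM (elimN eqP qe).
  have [h1 h2] := eqv h; rewrite !chi1 !chi2 in h1 h2.
  by apply: pairN; apply: (del_inj _ _ _ _ _ h1) || apply: (del_inj _ _ _ _ _ h2); slia.
apply/mBP; split.
- rewrite /DelS card_in_imset //.
  by move: hc; rewrite (cardsD1 e M) eM add1n => -[].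
- move=> q /imsetP [p /setD1P [pe pM] ->]; rewrite chi1 chi2.
  have [p1 p2 [a1 a2 a3 a4]] := chip pM (elimN eqP pe).
  by kins; slia.
- move=> x lx.
  pose y := if x < e.1 then nat_of_ord x else if x <= e.2 - 2 then x.+1 else x.+2.
  have hy : [/\ y < B, y < n.+1.*2, y <> e.1, y <> e.2 & del e.1 e.2 y = x].
    rewrite /y; case: ifP => h1; last case: ifP => h2;
    split; (try by slia); kins; slia.
  case: hy => y1 y2 y3 y4 y5.
  case: (hcov (Ordinal y1) y2) => p pM tp.
  have pe : p <> e.
    by move=> pe; subst p; case/tchP: tp => /= ?; slia.
  exists (chi e p); first by rewrite /DelS imset_f // !inE pM andbT; apply/eqP.
  rewrite tchE chi1 chi2; case/tchP: tp => /= ->; rewrite y5 eqxx ?orbT //.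
- move=> q r x /imsetP [p /setD1P [pe pM] ->] /imsetP [p' /setD1P [pe' pM'] ->].
  move=> /tchP; rewrite chi1 chi2 => ex /tchP; rewrite chi1 chi2 => fx.
  have [p1 p2 [a1 a2 a3 a4]] := chip pM (elimN eqP pe).
  have [q1 q2 [b1 b2 b3 b4]] := chip pM' (elimN eqP pe').
  have hi : forall a b : nat, a <> e.1 -> a <> e.2 -> b <> e.1 -> b <> e.2 ->
     del e.1 e.2 a = del e.1 e.2 b -> a = b.
    move=> a b ha hb hc0 hd hde; apply: (del_inj _ _ _ _ _ hde) => //; slia.
  congr chi; case: ex => ex; case: fx => fx.
  + have h : p.1 = p'.1 :> nat by apply: hi => //; rewrite ex fx.
    by apply: (hu p p' p.1) => //; rewrite tchE ?h eqxx ?orbT.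
  + have h : p.1 = p'.2 :> nat by apply: hi => //; rewrite ex fx.
    by apply: (hu p p' p.1) => //; rewrite tchE ?h eqxx ?orbT.
  + have h : p.2 = p'.1 :> nat by apply: hi => //; rewrite ex fx.
    by apply: (hu p p' p.2) => //; rewrite tchE ?h eqxx ?orbT.
  + have h : p.2 = p'.2 :> nat by apply: hi => //; rewrite ex fx.
    by apply: (hu p p' p.2) => //; rewrite tchE ?h eqxx ?orbT.
Qed.

Lemma Dg_in : Dg e \in DelS M e.
Proof.
have [e1 e2] := e_ord; have [f [fM f1 f2 f3]] := fex.
have fe : f != e by apply/eqP => fe; subst f; slia.
have -> : Dg e = chi e f by apply: pairN; rewrite ?chi1 ?chi2 ?Dg1 ?Dg2; kins; slia.
by rewrite imset_f // !inE fe fM.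
Qed.

Lemma Ee_Dg : Ee (Dg e) = e.
Proof.
have [e1 e2] := e_ord.
apply: pairN; rewrite /Ee ?mk1 ?mk2 ?Dg1 ?Dg2; try slia.
Qed.

Lemma InsDel : InsS (DelS M e) (Dg e) = M.
Proof.
have [e1 e2] := e_ord; have [f [fM f1 f2 f3]] := fex.
rewrite /InsS Ee_Dg /DelS -imset_comp.
have -> : [set (psi (Dg e) \o chi e) x | x in M :\ e] = M :\ e.
  rewrite -[RHS]imset_id; apply: eq_in_imset => p /setD1P [/eqP pe pM] /=.
  have [p1 p2 [a1 a2 a3 a4]] := chip pM pe.
  case: (p =P f) => [->|pf].
    have -> : chi e f = Dg e by apply: pairN; rewrite ?chi1 ?chi2 ?Dg1 ?Dg2; kins; slia.
    rewrite psi_eq; apply: pairN; rewrite ?mk1 ?mk2 ?Dg1 ?Dg2; slia.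
  have [b1 b2 b3 b4] := mB_av hM pM fM pf.
  have cg : chi e p <> Dg e.
    by move/eqv => [h1 _]; rewrite chi1 Dg1 in h1; kins; slia.
  rewrite psi_ne //; apply: pairN; rewrite ?mk1 ?mk2 ?chi1 ?chi2 ?Dg1 ?Dg2; kins; slia.
by rewrite setD1K // eM.
Qed.

End Del.

Lemma DelIns n M (g : T) : mB n M -> g \in M -> n.+1.*2 <= B ->
  DelS (InsS M g) (Ee g) = M /\ Dg (Ee g) = g.
Proof.
move=> hM gM hB; have [g1 g2] := mB_ord hM gM.
have E1 := Ee1 g.
have E2 : (Ee g).2 = g.2 + 2 :> nat by rewrite /Ee mk2 //; slia.
split; last by apply: pairN; rewrite ?Dg1 ?Dg2 ?E1 ?E2; slia.
rewrite /DelS /InsS setU1K ?(Ee_notin hM gM hB) // -imset_comp.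
rewrite -[RHS]imset_id; apply: eq_in_imset => p pM /=.
case: (p =P g) => [->|pg].
  rewrite psi_eq; apply: pairN; rewrite ?chi1 ?chi2 ?E1 ?E2 ?mk1 ?mk2; kins; slia.
have [k1 k2 _ _ [a1 a2 a3 a4]] := psip hM gM hB pM pg.
apply: pairN; rewrite ?chi1 ?chi2 ?E1 ?E2 ?k1 ?k2; kins; slia.
Qed.
End D.


Lemma card_dep (X Y : finType) (A : {set X}) (F : X -> {set Y}) :
  #|[set x : X * Y | (x.1 \in A) && (x.2 \in F x.1)]| = \sum_(a in A) #|F a|.
Proof.
rewrite -sum1_card.
rewrite (eq_bigl (fun x : X * Y => (x.1 \in A) && (x.2 \in F x.1))); last by move=> x; rewrite inE.
rewrite -(pair_big_dep (fun a => a \in A) (fun a b => b \in F a) (fun _ _ => 1)) /=.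
by apply: eq_bigr => a _; rewrite sum1_card.
Qed.

Section Cnt.
Context {B : nat}.
Local Notation T := ('I_B * 'I_B)%type.

Definition Pk n k := [set x : {set T} * T | (x.1 \in Sk n k) && (x.2 \in Oc x.1)].
Definition Qk n k := [set x : {set T} * T | (x.1 \in Sk n k) && (x.2 \in x.1)].
Definition InsF (y : {set T} * T) := (InsS y.1 y.2, Ee y.2).
Definition DelF (x : {set T} * T) := (DelS x.1 x.2, Dg x.2).

Lemma cardP n k : #|Pk n k| = k * #|@Sk B n k|.
Proof.
rewrite /Pk card_dep (eq_bigr (fun _ => k)); first by rewrite sum_nat_const mulnC.
by move=> M; rewrite inE => /andP [_ /eqP].
Qed.

Lemma cardQ n k : #|Qk n k| = n * #|@Sk B n k|.
Proof.
rewrite /Qk (card_dep (Sk n k) id) (eq_bigr (fun _ => n)); first by rewrite sum_nat_const mulnC.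
by move=> M; rewrite inE => /andP [/mBP [] ].
Qed.

Lemma PQ n k : n.+1.*2 <= B -> #|Pk n.+1 k.+1| = #|Qk n k|.
Proof.
move=> hB.
have DI : {in Qk n k, cancel InsF DelF}.
  case=> M g; rewrite inE /= => /andP [hS gM]; move: hS; rewrite inE => /andP [hM _].
  by have [h1 h2] := DelIns hM gM hB; rewrite /InsF /DelF /= h1 h2.
have -> : Pk n.+1 k.+1 = InsF @: Qk n k.
  apply/setP => -[M e]; apply/idP/idP.
    rewrite inE /= => /andP [hS eO]; move: hS; rewrite inE => /andP [hM /eqP hk].
    have hD := DelS_mB hM eO hB; have gD := Dg_in hM eO hB.
    have hI := InsDel hM eO hB; have hE := Ee_Dg hM eO hB.
    have := InsS_Occ hD gD hB; rewrite hI hk => -[hk'].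
    apply/imsetP; exists (DelF (M, e)); last by rewrite /InsF /DelF /= hI hE.
    by rewrite inE /= inE hD hk' eqxx gD.
  case/imsetP => -[M' g]; rewrite inE /= => /andP [hS gM]; move: hS.
  rewrite inE => /andP [hM /eqP hk] -[-> ->].
  rewrite inE /= inE (InsS_mB hM gM hB) (InsS_Occ hM gM hB) hk eqxx /=.
  by rewrite (InsS_Oc hM gM hB) setU11.
by rewrite card_in_imset //; exact: can_in_inj DI.
Qed.

Lemma recS n k : n.+1.*2 <= B -> k.+1 * #|@Sk B n.+1 k.+1| = n * #|@Sk B n k|.
Proof. by move=> hB; rewrite -cardP -cardQ PQ. Qed.

Lemma closedS n k : n.*2 <= B -> k < n -> #|@Sk B n k| = 'C(n.-1, k) * #|@Sk B (n - k) 0|.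
Proof.
elim: k n => [|k IH] n hB hk; first by rewrite bin0 mul1n subn0.
case: n hB hk => [//|n] hB hk.
apply/eqP; rewrite -(eqn_pmul2l (ltn0Sn k)) recS //.
rewrite IH //; last by apply: leq_trans hB; rewrite leq_double.
have hb : k.+1 * 'C(n, k.+1) = n * 'C(n.-1, k) by rewrite mul_bin_diag.
by rewrite /= subSS mulnA [X in _ == X]mulnA hb.
Qed.
End Cnt.


Theorem lemma2 (n k : nat) : k < n -> a_nk n k = 'C(n.-1, k) * a_nk (n - k) 0.
Proof.
move=> hk; rewrite a_cnt (closedS (leqnn _) hk) a_cnt.
have h : (n - k).*2 <= n.*2 by rewrite leq_double leq_subr.
by rewrite (cnt_wp h).
Qed.
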